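(* Fix finite $\mathcal{S}$, $\mathcal{A}$, $d_0\in\Delta(\mathcal{S})$, $\gamma\in[0,1)$, a reward $\mathcal{R}:\mathcal{S}\times\mathcal{A}\to[0,1]$, and transition models $\mathcal{T},\mathcal{T}'$ with $\delta=\frac12\max_{s,a}\|\mathcal{T}(\cdot\mid s,a)-\mathcal{T}'(\cdot\mid s,a)\|_1>0$. For any $\varepsilon>0$, if $1/(1-\gamma)<\sqrt{\varepsilon/\delta}$, then $(\mathcal{T},\mathcal{T}')$ is $\varepsilon$-unexploitable relative to every policy set and the task $(\mathcal{S},\mathcal{A},\_,d_0,\mathcal{R},\gamma)$.
   Context: For a transition model $\mathcal{T}$ and policy $\pi$ (stationary, or non-stationary $\pi=(\pi_0,\pi_1,\dots)$), $J_{\mathcal{T}}(\pi)=\mathbb{E}\big[\sum_{t\ge0}\gamma^t\mathcal{R}(s_t,a_t)\big]$ with $s_0\sim d_0$, $a_t\sim\pi_t(\cdot\mid s_t)$, $s_{t+1}\sim\mathcal{T}(\cdot\mid s_t,a_t)$. A task is an MDP without transition model; a policy set is any set of such policies. $(\mathcal{T},\mathcal{T}')$ is $\varepsilon$-exploitable relative to $\Pi$ if there exist $\pi,\pi'\in\Pi$ with $J_{\mathcal{T}}(\pi)-J_{\mathcal{T}}(\pi')>\varepsilon$ and $J_{\mathcal{T}'}(\pi')-J_{\mathcal{T}'}(\pi)>\varepsilon$; otherwise $\varepsilon$-unexploitable. *)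

(* Defs.v *)
From HB Require Import structures.
From mathcomp Require Import all_boot all_order all_algebra.
From mathcomp Require Import all_classical all_reals all_analysis.
Set Implicit Arguments. Unset Strict Implicit. Unset Printing Implicit Defensive.
Import Order.TTheory GRing.Theory Num.Theory.
Local Open Scope ring_scope.

Section MDP.
Variables (R : realType) (S A : finType).

Definition is_dist (T : finType) (p : T -> R) : Prop :=
  (forall x, 0 <= p x) /\ \sum_(x : T) p x = 1.

(* transition model: T s a s' = probability of s' given (s,a) *)
Definition trans_model := S -> A -> S -> R.
Definition is_trans (T : trans_model) : Prop :=
  forall s a, is_dist (T s a).

(* (possibly non-stationary) Markov policy pi = (pi_0, pi_1, ...):
   pi t s a = probability of action a at state s at time t *)
Definition policy := nat -> S -> A -> R.
Definition is_policy (pi : policy) : Prop :=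
  forall t s, is_dist (pi t s).

Fixpoint state_dist (d0 : S -> R) (T : trans_model) (pi : policy) (t : nat)
  : S -> R :=
  match t with
  | 0 => d0
  | t'.+1 => fun s' => \sum_(s : S) \sum_(a : A)
              state_dist d0 T pi t' s * pi t' s a * T s a s'
  end.

Definition step_reward (d0 : S -> R) (Rw : S -> A -> R) (T : trans_model)
  (pi : policy) (t : nat) : R :=
  \sum_(s : S) \sum_(a : A) state_dist d0 T pi t s * pi t s a * Rw s a.

Definition J (d0 : S -> R) (Rw : S -> A -> R) (gamma : R) (T : trans_model)
  (pi : policy) : R :=
  limn (fun n : nat => \sum_(0 <= t < n) gamma ^+ t * step_reward d0 Rw T pi t).

Definition tv_max (T T' : trans_model) : R :=
  2^-1 * \big[Num.max/0]_(s : S) \big[Num.max/0]_(a : A)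
           \sum_(s' : S) `|T s a s' - T' s a s'|.

Definition exploitable (d0 : S -> R) (Rw : S -> A -> R) (gamma : R)
  (Pi : set policy) (T T' : trans_model) (eps : R) : Prop :=
  exists pi pi', Pi pi /\ Pi pi' /\
    J d0 Rw gamma T pi - J d0 Rw gamma T pi' > eps /\
    J d0 Rw gamma T' pi' - J d0 Rw gamma T' pi > eps.

Definition unexploitable d0 Rw gamma Pi T T' eps : Prop :=
  ~ exploitable d0 Rw gamma Pi T T' eps.

End MDP.

(* Main.v *)
Require Import Defs.
From HB Require Import structures.
From mathcomp Require Import all_boot all_order all_algebra.
From mathcomp Require Import all_classical all_reals all_analysis.
From mathcomp Require Import ring lra.
Import Order.TTheory GRing.Theory Num.Theory.
Local Open Scope ring_scope.
Local Open Scope classical_set_scope.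

Section Aux.
Variables (R : realType) (S A : finType).

Lemma sd_dist (d0 : S -> R) (T : trans_model R S A) (pi : policy R S A) :
  is_dist d0 -> is_trans T -> is_policy pi ->
  forall t, is_dist (state_dist d0 T pi t).
Proof.
move=> hd hT hpi; elim=> [|t [IH0 IH1]] //=; split.
- move=> s'; apply: sumr_ge0 => s _; apply: sumr_ge0 => a _.
  by rewrite !mulr_ge0 //; [case: (hpi t s) | case: (hT s a)].
- rewrite exchange_big /= -IH1; apply: eq_bigr => s _.
  rewrite exchange_big /=.
  transitivity (\sum_(a:A) state_dist d0 T pi t s * pi t s a).
    apply: eq_bigr => a _; rewrite -mulr_sumr; case: (hT s a) => _ ->.
    by rewrite mulr1.
  by rewrite -mulr_sumr; case: (hpi t s) => _ ->; rewrite mulr1.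
Qed.

Lemma geom_sum (g : R) n : 0 <= g -> g < 1 ->
  \sum_(0 <= t < n) g ^+ t <= (1 - g)^-1.
Proof.
move=> g0 g1.
have E : (1 - g) * \sum_(0 <= t < n) g ^+ t = 1 - g ^+ n.
  elim: n => [|n IH]; first by rewrite big_geq // mulr0 expr0 subrr.
  by rewrite big_nat_recr //= mulrDr IH exprS; ring.
have hp : 0 < 1 - g by lra.
rewrite -(ler_pM2l hp) E mulfV ?gt_eqF //.
have : 0 <= g ^+ n by exact: exprn_ge0.
lra.
Qed.

Lemma wgeom_sum (g : R) n : 0 <= g -> g < 1 ->
  \sum_(0 <= t < n) t%:R * g ^+ t <= (1 - g)^-2.
Proof.
move=> g0 g1.
have E : (1 - g)^+2 * \sum_(0 <= t < n) t%:R * g ^+ t =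
   g - n%:R * g ^+ n + n%:R * g ^+ n.+1 - g ^+ n.+1.
  elim: n => [|n IH]. by rewrite big_geq // mulr0 !mul0r expr1 subr0 addr0 subrr.
  rewrite big_nat_recr //= mulrDr IH !exprS -!natr1; ring.
have hp : 0 < (1 - g)^+2 by rewrite exprn_gt0 //; lra.
rewrite -(ler_pM2l hp) E mulfV ?gt_eqF //.
have h1 : 0 <= g ^+ n by exact: exprn_ge0.
have h2 : 0 <= n%:R :> R by [].
have h3 : 0 <= g ^+ n * (n%:R * (1 - g) + g).
  by apply: mulr_ge0 => //; apply: addr_ge0 => //; apply: mulr_ge0 => //; lra.
rewrite exprS; nra.
Qed.


Definition Mx (T T' : trans_model R S A) : R :=
  \big[Num.max/0]_(s : S) \big[Num.max/0]_(a : A)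
           \sum_(s' : S) `|T s a s' - T' s a s'|.

Lemma Mx_ge (T T' : trans_model R S A) s a :
  \sum_(s' : S) `|T s a s' - T' s a s'| <= Mx T T'.
Proof.
apply: le_trans (le_bigmax _ _ s).
exact: (le_bigmax _ (fun a => \sum_(s' : S) `|T s a s' - T' s a s'|) a).
Qed.

Lemma L1 (d0 : S -> R) (T T' : trans_model R S A) (pi : policy R S A) :
  is_dist d0 -> is_trans T -> is_trans T' -> is_policy pi ->
  forall t, \sum_s `|state_dist d0 T pi t s - state_dist d0 T' pi t s|
            <= t%:R * Mx T T'.
Proof.
move=> hd hT hT' hpi; elim=> [|t IH].
  by rewrite big1 ?mul0r // => s _; rewrite /= subrr normr0.
set d := state_dist d0 T pi t; set d' := state_dist d0 T' pi t.
have [hd'0 hd'1] := @sd_dist d0 T' pi hd hT' hpi t.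
have E : forall s', state_dist d0 T pi t.+1 s' - state_dist d0 T' pi t.+1 s' =
  \sum_s \sum_a ((d s - d' s) * pi t s a * T s a s' +
                 d' s * pi t s a * (T s a s' - T' s a s')).
  move=> s' /=; rewrite -sumrB; apply: eq_bigr => s _; rewrite -sumrB.
  by apply: eq_bigr => a _; rewrite /d /d'; ring.
have step : forall s a, \sum_s' (`|d s - d' s| * pi t s a * T s a s' +
                 d' s * pi t s a * `|T s a s' - T' s a s'|)
    <= `|d s - d' s| * pi t s a + d' s * pi t s a * Mx T T'.
  move=> s a; rewrite big_split /= -!mulr_sumr.
  case: (hT s a) => _ ->; rewrite mulr1 lerD2l; apply: ler_wpM2l.
    by apply: mulr_ge0 => //; case: (hpi t s).
  exact: Mx_ge.
apply: (@le_trans _ _ (\sum_s' \sum_s \sum_a (`|d s - d' s| * pi t s a * T s a s' +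
                 d' s * pi t s a * `|T s a s' - T' s a s'|))).
  apply: ler_sum => s' _; rewrite E.
  apply: le_trans (ler_norm_sum _ _ _) _; apply: ler_sum => s _.
  apply: le_trans (ler_norm_sum _ _ _) _; apply: ler_sum => a _.
  apply: le_trans (ler_normD _ _) _.
  have p0 : 0 <= pi t s a by case: (hpi t s).
  have T0 : 0 <= T s a s' by case: (hT s a).
  rewrite !normrM (ger0_norm p0) (ger0_norm T0) (ger0_norm (hd'0 s)) //.
rewrite exchange_big /=.
apply: (@le_trans _ _ (\sum_s \sum_a (`|d s - d' s| * pi t s a + d' s * pi t s a * Mx T T'))).
  apply: ler_sum => s _; rewrite exchange_big /=; apply: ler_sum => a _; exact: step.
under eq_bigr => s _ do rewrite big_split /=.
rewrite big_split /=.
have -> : \sum_s \sum_a `|d s - d' s| * pi t s a = \sum_s `|d s - d' s|.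
  apply: eq_bigr => s _; rewrite -mulr_sumr; case: (hpi t s) => _ ->; by rewrite mulr1.
have -> : \sum_s \sum_a d' s * pi t s a * Mx T T' = Mx T T'.
  rewrite -[RHS]mul1r -hd'1 mulr_suml; apply: eq_bigr => s _.
  rewrite -mulr_suml -mulr_sumr; case: (hpi t s) => _ ->; by rewrite mulr1.
by rewrite -natr1 mulrDl mul1r lerD2r.
Qed.


Lemma step_diff (d0 : S -> R) (Rw : S -> A -> R) (T T' : trans_model R S A)
  (pi : policy R S A) :
  is_dist d0 -> (forall s a, 0 <= Rw s a <= 1) ->
  is_trans T -> is_trans T' -> is_policy pi ->
  forall t, `|step_reward d0 Rw T pi t - step_reward d0 Rw T' pi t|
            <= t%:R * tv_max T T'.
Proof.
move=> hd hR hT hT' hpi t.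
set d := state_dist d0 T pi t; set d' := state_dist d0 T' pi t.
have [_ h1] := @sd_dist d0 T pi hd hT hpi t.
have [_ h1'] := @sd_dist d0 T' pi hd hT' hpi t.
have E : step_reward d0 Rw T pi t - step_reward d0 Rw T' pi t =
   \sum_s \sum_a (d s - d' s) * pi t s a * (Rw s a - 2^-1).
  have Z : \sum_s \sum_a (d s - d' s) * pi t s a * 2^-1 = 0.
    transitivity (2^-1 * (\sum_s d s - \sum_s d' s));
      last by rewrite /d /d' h1 h1' subrr mulr0.
    rewrite -sumrB mulr_sumr; apply: eq_bigr => s _.
    by rewrite -mulr_suml -mulr_sumr; case: (hpi t s) => _ ->; rewrite mulr1 mulrC.
  rewrite -[LHS]subr0 -[X in _ - X = _]Z /step_reward -!sumrB; apply: eq_bigr => s _.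
  by rewrite -!sumrB; apply: eq_bigr => a _; rewrite /d /d'; ring.
rewrite E; apply: le_trans (ler_norm_sum _ _ _) _.
apply: (@le_trans _ _ (\sum_s `|d s - d' s| * 2^-1)).
  apply: ler_sum => s _; apply: le_trans (ler_norm_sum _ _ _) _.
  apply: (@le_trans _ _ (\sum_a `|d s - d' s| * pi t s a * 2^-1)).
    apply: ler_sum => a _.
    have p0 : 0 <= pi t s a by case: (hpi t s).
    rewrite !normrM (ger0_norm p0); apply: ler_wpM2l.
      by apply: mulr_ge0.
    have /andP [r0 r1] := hR s a.
    rewrite ler_norml; apply/andP; split; lra.
  by rewrite -mulr_suml -mulr_sumr; case: (hpi t s) => _ ->; rewrite mulr1.
rewrite -mulr_suml.
have := @L1 d0 T T' pi hd hT hT' hpi t; rewrite /tv_max -/(Mx T T') -/d -/d'.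
move=> h; nra.
Qed.

Lemma tv_sym (T T' : trans_model R S A) : tv_max T' T = tv_max T T'.
Proof.
rewrite /tv_max; congr (_ * _); apply: eq_bigr => s _; apply: eq_bigr => a _.
by apply: eq_bigr => s' _; rewrite distrC.
Qed.

Lemma step_bounds (d0 : S -> R) (Rw : S -> A -> R) (T : trans_model R S A)
  (pi : policy R S A) :
  is_dist d0 -> (forall s a, 0 <= Rw s a <= 1) ->
  is_trans T -> is_policy pi ->
  forall t, 0 <= step_reward d0 Rw T pi t <= 1.
Proof.
move=> hd hR hT hpi t.
have [h0 h1] := @sd_dist d0 T pi hd hT hpi t.
apply/andP; split.
  apply: sumr_ge0 => s _; apply: sumr_ge0 => a _.
  have /andP [r0 _] := hR s a.
  by rewrite !mulr_ge0 //; case: (hpi t s).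
rewrite -h1; apply: ler_sum => s _.
apply: (@le_trans _ _ (\sum_a state_dist d0 T pi t s * pi t s a)).
  apply: ler_sum => a _; have /andP [_ r1] := hR s a.
  apply: ler_piMr => //; apply: mulr_ge0 => //; by case: (hpi t s).
by rewrite -mulr_sumr; case: (hpi t s) => _ ->; rewrite mulr1.
Qed.

Lemma psum_cvg (d0 : S -> R) (Rw : S -> A -> R) (g : R) (T : trans_model R S A)
  (pi : policy R S A) :
  is_dist d0 -> (forall s a, 0 <= Rw s a <= 1) -> 0 <= g -> g < 1 ->
  is_trans T -> is_policy pi ->
  cvgn (fun n : nat => \sum_(0 <= t < n) g ^+ t * step_reward d0 Rw T pi t).
Proof.
move=> hd hR g0 g1 hT hpi.
set u := fun n : nat => _.
have hb := @step_bounds d0 Rw T pi hd hR hT hpi.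
have hinc : {homo u : n m / (n <= m)%N >-> n <= m}.
  apply/nondecreasing_seqP => n; rewrite /u big_nat_recr //= lerDl.
  have /andP [h0 _] := hb n.
  by apply: mulr_ge0 => //; apply: exprn_ge0.
have hub : has_ubound (range u).
  exists (1 - g)^-1 => _ [n _ <-].
  apply: le_trans _ (@geom_sum g n g0 g1); apply: ler_sum => t _.
  have /andP [_ h1] := hb t.
  by apply: ler_piMr => //; apply: exprn_ge0.
by apply/cvg_ex; eexists; exact: (nondecreasing_cvgn hinc hub).
Qed.

Lemma key (d0 : S -> R) (Rw : S -> A -> R) (g : R) (T1 T2 : trans_model R S A)
  (p : policy R S A) :
  is_dist d0 -> (forall s a, 0 <= Rw s a <= 1) -> 0 <= g -> g < 1 ->
  is_trans T1 -> is_trans T2 -> is_policy p -> 0 <= tv_max T1 T2 ->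
  J d0 Rw g T1 p - J d0 Rw g T2 p <= tv_max T1 T2 * (1 - g)^-2.
Proof.
move=> hd hR g0 g1 hT1 hT2 hp htv.
have c1 := @psum_cvg d0 Rw g T1 p hd hR g0 g1 hT1 hp.
have c2 := @psum_cvg d0 Rw g T2 p hd hR g0 g1 hT2 hp.
rewrite /J -(limB c1 c2).
apply: limr_le; first exact: is_cvgB.
apply: nearW => n /=.
rewrite fctE -sumrB.
apply: (@le_trans _ _ (\sum_(0 <= t < n) tv_max T1 T2 * (t%:R * g ^+ t))).
  apply: ler_sum => t _.
  have := @step_diff d0 Rw T1 T2 p hd hR hT1 hT2 hp t.
  have := exprn_ge0 t g0.
  set x := g ^+ t; set s1 := step_reward _ _ _ _ _; set s2 := step_reward _ _ _ _ _.
  move=> hx hs.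
  have hs' : s1 - s2 <= t%:R * tv_max T1 T2 by apply: le_trans (ler_norm _) hs.
  nra.
rewrite -mulr_sumr; apply: ler_wpM2l => //; exact: wgeom_sum.
Qed.

End Aux.

Theorem mainTheorem15 (R : realType) (S A : finType)
  (d0 : S -> R) (gamma : R) (Rw : S -> A -> R) (T T' : trans_model R S A)
  (eps : R) :
  is_dist d0 -> 0 <= gamma -> gamma < 1 ->
  (forall s a, 0 <= Rw s a <= 1) ->
  is_trans T -> is_trans T' ->
  0 < tv_max T T' ->
  0 < eps ->
  (1 - gamma)^-1 < Num.sqrt (eps / tv_max T T') ->
  forall Pi : set (policy R S A),
    (forall pi, Pi pi -> is_policy pi) ->
    unexploitable d0 Rw gamma Pi T T' eps.
Proof.
move=> hd g0 g1 hR hT hT' hM he hsq Pi hPi [pi [pi' [Ppi [Ppi' [e1 e2]]]]].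
have htv : 0 <= tv_max T T' by apply: ltW.
have k1 := @key R S A d0 Rw gamma T T' pi hd hR g0 g1 hT hT' (hPi _ Ppi) htv.
have k2 := @key R S A d0 Rw gamma T' T pi' hd hR g0 g1 hT' hT (hPi _ Ppi') (ltac:(by rewrite tv_sym)).
rewrite tv_sym in k2.
set x := (1 - gamma)^-1 in hsq.
have x0 : 0 <= x by rewrite /x invr_ge0; lra.
have q0 : 0 <= eps / tv_max T T' by apply: divr_ge0; apply: ltW.
have hx2 : x * x < eps / tv_max T T'.
  rewrite -(sqr_sqrtr q0) expr2; exact: ltr_pM.
have hB : tv_max T T' * (1 - gamma)^-2 < eps.
  have -> : (1 - gamma)^-2 = x * x by rewrite /x -exprVn expr2.
  rewrite -(ltr_pM2l hM) in hx2.
  have ee : tv_max T T' * (eps / tv_max T T') = eps.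
    by rewrite mulrC divfK // gt_eqF.
  by rewrite ee in hx2.
clear -k1 k2 e1 e2 hB; lra.
Qed.
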